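(* Let $x_0>0$ and let $u:[x_0,b)\to(0,\infty)$ be a solution of $\frac{u''}{1+(u')^2}=\frac{xu'}{2}-\frac u2+\frac{n-1}{u}$ with $u(x_0)<\sqrt{2(n-1)}$ and $u'(x_0)=0$. Then $u$ is strictly convex on $[x_0,b)$.
   Context: $n\ge2$ is a fixed integer. *)

(* Defs.v *)
From Stdlib Require Import Reals.
From Coquelicot Require Import Coquelicot.
Open Scope R_scope.

Definition in_Ico (x0 : R) (b : Rbar) (x : R) : Prop :=
  x0 <= x /\ Rbar_lt x b.

Definition deriv_on_Ico (x0 : R) (b : Rbar) (f f' : R -> R) : Prop :=
  forall x, in_Ico x0 b x ->
    filterlim (fun y => (f y - f x) / (y - x))
      (within (fun y => in_Ico x0 b y /\ y <> x) (locally x))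
      (locally (f' x)).

Definition strictly_convex_on_Ico (x0 : R) (b : Rbar) (f : R -> R) : Prop :=
  forall x y t, in_Ico x0 b x -> in_Ico x0 b y -> x <> y -> 0 < t < 1 ->
    f (t * x + (1 - t) * y) < t * f x + (1 - t) * f y.

(* Main.v *)
Require Import Defs.
From Stdlib Require Import Reals Lra Psatz Classical.
From Coquelicot Require Import Coquelicot.
Open Scope R_scope.

Lemma quot_bound x0 b f f' x : deriv_on_Ico x0 b f f' -> in_Ico x0 b x ->
  exists d, 0 < d /\ forall y, in_Ico x0 b y -> Rabs (y - x) < d ->
    Rabs (f y - f x) <= (Rabs (f' x) + 1) * Rabs (y - x).
Proof.
  intros Hd Hx. specialize (Hd x Hx).
  assert (H := Hd (ball (f' x) 1) (locally_ball (f' x) (mkposreal 1 Rlt_0_1))).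
  destruct H as [eps Heps].
  exists eps. split; [apply cond_pos|]. intros y Hy Hyx.
  destruct (Req_dec y x) as [->|Hne].
  { replace (f x - f x) with 0 by ring. rewrite Rabs_R0. apply Rmult_le_pos; [|apply Rabs_pos].
    pose proof (Rabs_pos (f' x)); lra. }
  assert (Hb : ball x eps y).
  { unfold ball; simpl; unfold AbsRing_ball, abs, minus, plus, opp; simpl. exact Hyx. }
  specialize (Heps y Hb (conj Hy Hne)).
  unfold ball in Heps; simpl in Heps; unfold AbsRing_ball, abs, minus, plus, opp in Heps; simpl in Heps.
  set (q := (f y - f x) / (y - x)) in *.
  assert (Hq : f y - f x = q * (y - x)) by (unfold q; field; lra).
  rewrite Hq, Rabs_mult. apply Rmult_le_compat_r; [apply Rabs_pos|].
  revert Heps. unfold Rabs; repeat destruct Rcase_abs; lra.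
Qed.

Lemma Rbar_nbhd (x : R) (b : Rbar) : Rbar_lt x b ->
  exists d, 0 < d /\ forall y, y < x + d -> Rbar_lt y b.
Proof.
  destruct b as [r| |]; simpl; intros H.
  - exists (r - x). split; [lra|]. intros y Hy. lra.
  - exists 1. split; [lra|]. intros; exact I.
  - destruct H.
Qed.

Lemma Rbar_lt_le_trans' (x y : R) (b : Rbar) : x <= y -> Rbar_lt y b -> Rbar_lt x b.
Proof. destruct b as [r| |]; simpl; intros; try lra; auto. Qed.

Definition ext (x0 : R) (f : R -> R) (x : R) := f (Rmax x0 x).

Lemma ext_eq x0 f x : x0 <= x -> ext x0 f x = f x.
Proof. intros H. unfold ext. rewrite Rmax_right; auto. Qed.

Lemma ext_cont x0 b f f' x : deriv_on_Ico x0 b f f' -> in_Ico x0 b x ->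
  continuity_pt (ext x0 f) x.
Proof.
  intros Hd Hx.
  destruct (quot_bound x0 b f f' x Hd Hx) as [d1 [Hd1 HB]].
  destruct Hx as [Hx0 Hxb].
  destruct (Rbar_nbhd x b Hxb) as [d2 [Hd2 HN]].
  unfold continuity_pt, continue_in, limit1_in, limit_in; simpl. unfold R_dist.
  intros eps He.
  set (K := Rabs (f' x) + 1).
  assert (HK : 0 < K) by (unfold K; pose proof (Rabs_pos (f' x)); lra).
  exists (Rmin (Rmin d1 d2) (eps / K)). split.
  { apply Rmin_pos; [apply Rmin_pos; lra|]. apply Rdiv_lt_0_compat; lra. }
  intros y [_ Hy].
  assert (Hy1 : Rabs (y - x) < d1) by (eapply Rlt_le_trans; [exact Hy|]; eapply Rle_trans; [apply Rmin_l|apply Rmin_l]).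
  assert (Hy2 : Rabs (y - x) < d2) by (eapply Rlt_le_trans; [exact Hy|]; eapply Rle_trans; [apply Rmin_l|apply Rmin_r]).
  assert (Hy3 : Rabs (y - x) < eps / K) by (eapply Rlt_le_trans; [exact Hy|]; apply Rmin_r).
  unfold ext. rewrite (Rmax_right x0 x) by lra.
  set (z := Rmax x0 y).
  assert (Hz1 : x0 <= z) by apply Rmax_l.
  assert (Hzx : Rabs (z - x) <= Rabs (y - x)).
  { unfold z, Rmax. destruct (Rle_dec x0 y); [lra|].
    revert Hy. unfold Rabs; repeat destruct Rcase_abs; lra. }
  assert (Hzi : in_Ico x0 b z).
  { split; auto. apply HN. revert Hzx Hy2. unfold Rabs; repeat destruct Rcase_abs; lra. }
  specialize (HB z Hzi ltac:(lra)).
  apply Rle_lt_trans with (K * Rabs (z - x)); [exact HB|].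
  apply Rle_lt_trans with (K * Rabs (y - x)).
  { apply Rmult_le_compat_l; lra. }
  apply Rmult_lt_reg_r with (/ K). { apply Rinv_0_lt_compat; lra. }
  replace (K * Rabs (y - x) * / K) with (Rabs (y - x)) by (field; lra).
  exact Hy3.
Qed.

Lemma ext_deriv x0 b f f' x : deriv_on_Ico x0 b f f' -> x0 < x -> Rbar_lt x b ->
  is_derive (ext x0 f) x (f' x).
Proof.
  intros Hd Hx Hxb.
  assert (Hxi : in_Ico x0 b x) by (split; [lra|auto]).
  destruct (Rbar_nbhd x b Hxb) as [d2 [Hd2 HN]].
  specialize (Hd x Hxi).
  apply is_derive_Reals. unfold derivable_pt_lim.
  intros eps He.
  assert (H := Hd (ball (f' x) eps) (locally_ball (f' x) (mkposreal eps He))).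
  destruct H as [d1 Hd1].
  assert (Hpos : 0 < Rmin (Rmin d1 d2) (x - x0)).
  { apply Rmin_pos; [apply Rmin_pos; [apply cond_pos|lra]|lra]. }
  exists (mkposreal _ Hpos). intros h Hh0 Hh. simpl in Hh.
  assert (Hh1 : Rabs h < d1) by (eapply Rlt_le_trans; [exact Hh|]; eapply Rle_trans; [apply Rmin_l|apply Rmin_l]).
  assert (Hh2 : Rabs h < d2) by (eapply Rlt_le_trans; [exact Hh|]; eapply Rle_trans; [apply Rmin_l|apply Rmin_r]).
  assert (Hh3 : Rabs h < x - x0) by (eapply Rlt_le_trans; [exact Hh|]; apply Rmin_r).
  assert (Hyi : in_Ico x0 b (x + h)).
  { split; [revert Hh3; unfold Rabs; destruct Rcase_abs; lra|].
    apply HN. revert Hh2; unfold Rabs; destruct Rcase_abs; lra. }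
  assert (Hb : ball x d1 (x + h)).
  { unfold ball; simpl; unfold AbsRing_ball, abs, minus, plus, opp; simpl.
    replace (x + h + - x) with h by ring. exact Hh1. }
  assert (Hne : x + h <> x) by lra.
  specialize (Hd1 (x + h) Hb (conj Hyi Hne)).
  unfold ball in Hd1; simpl in Hd1; unfold AbsRing_ball, abs, minus, plus, opp in Hd1; simpl in Hd1.
  unfold ext. rewrite (Rmax_right x0 x) by lra. rewrite (Rmax_right x0 (x + h)) by (destruct Hyi; lra).
  replace (x + h - x) with h in Hd1 by ring. exact Hd1.
Qed.

Lemma cont_nbhd h m : continuity_pt h m -> forall eps, 0 < eps ->
  exists d, 0 < d /\ forall y, Rabs (y - m) < d -> Rabs (h y - h m) < eps.
Proof.
  intros Hc eps He.
  unfold continuity_pt, continue_in, limit1_in, limit_in in Hc; simpl in Hc. unfold R_dist in Hc.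
  destruct (Hc eps He) as [d [Hd H]]. exists d. split; auto.
  intros y Hy. destruct (Req_dec y m) as [->|Hne].
  - replace (h m - h m) with 0 by ring. rewrite Rabs_R0. lra.
  - apply H. split; [split; auto|exact Hy]. exact I.
Qed.

Lemma first_failure (h : R -> R) (a c : R) : a < c ->
  (forall t, a <= t <= c -> continuity_pt h t) -> 0 < h a -> h c <= 0 ->
  exists m, a < m <= c /\ h m = 0 /\ forall t, a <= t < m -> 0 < h t.
Proof.
  intros Hac Hc Ha Hcn.
  set (E := fun x => a <= x <= c /\ forall t, a <= t <= x -> 0 < h t).
  assert (HbE : bound E). { exists c. intros x [Hx _]. lra. }
  assert (HeE : exists x, E x). { exists a. split; [lra|]. intros t Ht. replace t with a by lra. auto. }
  destruct (completeness E HbE HeE) as [m [Hub Hlub]].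
  assert (HaE : E a). { split; [lra|]. intros t Ht. replace t with a by lra. auto. }
  assert (Ham : a <= m) by (apply Hub; auto).
  assert (Hmc : m <= c) by (apply Hlub; intros x [Hx _]; lra).
  assert (Hbelow : forall t, a <= t < m -> 0 < h t).
  { intros t Ht. destruct (classic (exists x, E x /\ t < x)) as [[x [[Hx1 Hx2] Htx]]|Hn].
    - apply Hx2. lra.
    - exfalso. assert (m <= t); [|lra]. apply Hlub. intros x Hx.
      destruct (Rle_dec x t); auto. exfalso. apply Hn. exists x. split; auto; lra. }
  assert (Hma : a < m).
  { destruct (cont_nbhd h a (Hc a ltac:(lra)) (h a) Ha) as [d [Hd Hn]].
    set (y := Rmin (a + d / 2) c).
    assert (Hy : E y).
    { split. { unfold y. split; [apply Rmin_glb; lra|apply Rmin_r]. }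
      intros t Ht. assert (Rabs (t - a) < d).
      { assert (t <= a + d/2) by (eapply Rle_trans; [apply Ht|apply Rmin_l]).
        unfold Rabs; destruct Rcase_abs; lra. }
      specialize (Hn t H). revert Hn. unfold Rabs; destruct Rcase_abs; lra. }
    assert (a < y) by (unfold y; apply Rmin_glb_lt; lra).
    specialize (Hub y Hy). lra. }
  exists m. split; [lra|]. split; [|exact Hbelow].
  destruct (Rtotal_order (h m) 0) as [Hneg|[Hz|Hpos]]; auto; exfalso.
  - destruct (cont_nbhd h m (Hc m ltac:(lra)) (- h m) ltac:(lra)) as [d [Hd Hn]].
    set (t := Rmax a (m - d / 2)).
    assert (Ht1 : a <= t) by apply Rmax_l.
    assert (Ht2 : t < m) by (unfold t; apply Rmax_lub_lt; lra).
    assert (Rabs (t - m) < d).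
    { assert (m - d/2 <= t) by apply Rmax_r. unfold Rabs; destruct Rcase_abs; lra. }
    specialize (Hn t H). specialize (Hbelow t (conj Ht1 Ht2)).
    revert Hn. unfold Rabs; destruct Rcase_abs; lra.
  - destruct (Req_dec m c) as [->|Hmc'].
    + lra.
    + destruct (cont_nbhd h m (Hc m ltac:(lra)) (h m) Hpos) as [d [Hd Hn]].
      set (y := Rmin (m + d / 2) c).
      assert (Hy : E y).
      { split. { unfold y. split; [apply Rmin_glb; lra|apply Rmin_r]. }
        intros t Ht. destruct (Rlt_dec t m) as [Htm|Htm].
        - apply Hbelow; lra.
        - assert (Rabs (t - m) < d).
          { assert (t <= m + d/2) by (eapply Rle_trans; [apply Ht|apply Rmin_l]).
            unfold Rabs; destruct Rcase_abs; lra. }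
          specialize (Hn t H). revert Hn. unfold Rabs; destruct Rcase_abs; lra. }
      assert (m < y) by (unfold y; apply Rmin_glb_lt; lra).
      specialize (Hub y Hy). lra.
Qed.

Lemma mvt_Ico x0 (b : Rbar) F DF s t : x0 <= s -> s < t -> Rbar_lt t b ->
  (forall r, x0 < r -> Rbar_lt r b -> is_derive F r (DF r)) ->
  (forall r, in_Ico x0 b r -> continuity_pt F r) ->
  exists xi, s <= xi <= t /\ F t - F s = DF xi * (t - s).
Proof.
  intros Hs Hst Htb Hd Hc.
  destruct (MVT_gen F s t DF) as [xi [Hxi Heq]].
  - intros r Hr. rewrite Rmin_left in Hr by lra. rewrite Rmax_right in Hr by lra.
    apply Hd; [lra|]. apply Rbar_lt_le_trans' with t; [lra|auto].
  - intros r Hr. rewrite Rmin_left in Hr by lra. rewrite Rmax_right in Hr by lra.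
    apply Hc. split; [lra|]. apply Rbar_lt_le_trans' with t; [lra|auto].
  - rewrite Rmin_left in Hxi by lra. rewrite Rmax_right in Hxi by lra.
    exists xi. split; auto.
Qed.

Lemma convex_from_deriv x0 (b : Rbar) (U P : R -> R) :
  (forall r, x0 < r -> Rbar_lt r b -> is_derive U r (P r)) ->
  (forall r, in_Ico x0 b r -> continuity_pt U r) ->
  (forall s t, in_Ico x0 b s -> in_Ico x0 b t -> s < t -> P s < P t) ->
  forall x y t, in_Ico x0 b x -> in_Ico x0 b y -> x < y -> 0 < t < 1 ->
    U (t * x + (1 - t) * y) < t * U x + (1 - t) * U y.
Proof.
  intros Hd Hc Pinc x y t Hx Hy Hxy Ht.
  assert (Hin : forall z, x <= z <= y -> in_Ico x0 b z).
  { intros z Hz. destruct Hx, Hy. split; [lra|]. apply Rbar_lt_le_trans' with y; [lra|auto]. }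
  assert (TL : forall a z, x <= a -> a < z -> z <= y -> U z - U a < P z * (z - a)).
  { intros a z Ha Haz Hz.
    set (m := (a + z) / 2).
    destruct (mvt_Ico x0 b U P a m) as [e1 [He1 E1]]; auto.
    { destruct (Hin a); [lra|lra]. } { unfold m; lra. }
    { destruct (Hin m); [unfold m; lra|auto]. }
    destruct (mvt_Ico x0 b U P m z) as [e2 [He2 E2]]; auto.
    { destruct (Hin m); [unfold m; lra|lra]. } { unfold m; lra. }
    { destruct (Hin z); [lra|auto]. }
    assert (P e1 < P z) by (apply Pinc; [apply Hin; unfold m in *; lra|apply Hin; lra|unfold m in *; lra]).
    assert (P e2 <= P z).
    { destruct (Req_dec e2 z) as [->|Hne]; [lra|].
      left. apply Pinc; [apply Hin; unfold m in *; lra|apply Hin; lra|lra]. }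
    assert (P e1 * (m - a) < P z * (m - a)) by (apply Rmult_lt_compat_r; unfold m; lra).
    assert (P e2 * (z - m) <= P z * (z - m)) by (apply Rmult_le_compat_r; unfold m in *; lra).
    replace (U z - U a) with ((U m - U a) + (U z - U m)) by ring.
    rewrite E1, E2. replace (z - a) with ((m - a) + (z - m)) by ring. lra. }
  assert (TR : forall z w, x <= z -> z < w -> w <= y -> U w - U z > P z * (w - z)).
  { intros z w Hz Hzw Hw.
    set (m := (z + w) / 2).
    destruct (mvt_Ico x0 b U P z m) as [e1 [He1 E1]]; auto.
    { destruct (Hin z); [lra|lra]. } { unfold m; lra. }
    { destruct (Hin m); [unfold m; lra|auto]. }
    destruct (mvt_Ico x0 b U P m w) as [e2 [He2 E2]]; auto.
    { destruct (Hin m); [unfold m; lra|lra]. } { unfold m; lra. }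
    { destruct (Hin w); [lra|auto]. }
    assert (P z < P e2) by (apply Pinc; [apply Hin; lra|apply Hin; unfold m in *; lra|unfold m in *; lra]).
    assert (P z <= P e1).
    { destruct (Req_dec e1 z) as [->|Hne]; [lra|].
      left. apply Pinc; [apply Hin; lra|apply Hin; unfold m in *; lra|lra]. }
    assert (P z * (w - m) < P e2 * (w - m)) by (apply Rmult_lt_compat_r; unfold m; lra).
    assert (P z * (m - z) <= P e1 * (m - z)) by (apply Rmult_le_compat_r; unfold m in *; lra).
    replace (U w - U z) with ((U m - U z) + (U w - U m)) by ring.
    rewrite E1, E2. replace (w - z) with ((m - z) + (w - m)) by ring. lra. }
  set (z := t * x + (1 - t) * y).
  assert (Hz1 : x < z) by (unfold z; nra).
  assert (Hz2 : z < y) by (unfold z; nra).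
  specialize (TL x z ltac:(lra) Hz1 ltac:(lra)).
  specialize (TR z y ltac:(lra) Hz2 ltac:(lra)).
  assert (H1 : t * (U z - U x) < t * (P z * (z - x))) by (apply Rmult_lt_compat_l; lra).
  assert (H2 : (1 - t) * (U y - U z) > (1 - t) * (P z * (y - z))) by (apply Rmult_lt_compat_l; lra).
  assert (E : t * (P z * (z - x)) = (1 - t) * (P z * (y - z))) by (unfold z; ring).
  lra.
Qed.

Lemma cpm f g x : continuity_pt f x -> continuity_pt g x -> continuity_pt (fun t => f t * g t) x.
Proof. intros H1 H2. exact (continuity_pt_mult f g x H1 H2). Qed.
Lemma cpp f g x : continuity_pt f x -> continuity_pt g x -> continuity_pt (fun t => f t + g t) x.
Proof. intros H1 H2. exact (continuity_pt_plus f g x H1 H2). Qed.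
Lemma cpmi f g x : continuity_pt f x -> continuity_pt g x -> continuity_pt (fun t => f t - g t) x.
Proof. intros H1 H2. exact (continuity_pt_minus f g x H1 H2). Qed.
Lemma cpd f g x : continuity_pt f x -> continuity_pt g x -> g x <> 0 -> continuity_pt (fun t => f t / g t) x.
Proof. intros H1 H2 H3. exact (continuity_pt_div f g x H1 H2 H3). Qed.
Lemma cpc (a : R) x : continuity_pt (fun _ => a) x.
Proof. apply continuity_pt_const. intros ? ?; reflexivity. Qed.
Lemma cpi x : continuity_pt (fun t => t) x.
Proof. apply continuity_pt_id. Qed.

Lemma cont_W (U P : R -> R) (c x : R) : continuity_pt U x -> continuity_pt P x -> U x <> 0 ->
  continuity_pt (fun t => (1 + P t * P t) * (t * P t / 2 - U t / 2 + c / U t)) x.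
Proof.
  intros HU HP Hne.
  apply cpm; [apply cpp; [apply cpc|apply cpm; auto]|].
  apply cpp; [apply cpmi|apply cpd; auto; apply cpc].
  - apply cpd; [apply cpm; [apply cpi|auto]|apply cpc|lra].
  - apply cpd; [auto|apply cpc|lra].
Qed.

Theorem lemma2p10 (n : nat) (hn : (2 <= n)%nat)
  (x0 : R) (b : Rbar) (u u' u'' : R -> R)
  (hx0 : 0 < x0) (hb : Rbar_lt x0 b)
  (hpos : forall x, in_Ico x0 b x -> 0 < u x)
  (hu' : deriv_on_Ico x0 b u u')
  (hu'' : deriv_on_Ico x0 b u' u'')
  (hode : forall x, in_Ico x0 b x ->
     u'' x / (1 + (u' x) ^ 2) = x * u' x / 2 - u x / 2 + (INR n - 1) / u x)
  (hinit : u x0 < sqrt (2 * (INR n - 1)))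
  (hinit' : u' x0 = 0) :
  strictly_convex_on_Ico x0 b u.
Proof.
  set (c := INR n - 1) in *.
  assert (Hc : 1 <= c). { unfold c. apply le_INR in hn. simpl in hn. lra. }
  set (U := ext x0 u). set (P := ext x0 u').
  assert (HUeq : forall t, in_Ico x0 b t -> U t = u t) by (intros t [Ht _]; apply ext_eq; auto).
  assert (HPeq : forall t, in_Ico x0 b t -> P t = u' t) by (intros t [Ht _]; apply ext_eq; auto).
  assert (HcU : forall t, in_Ico x0 b t -> continuity_pt U t) by (intros; eapply ext_cont; eauto).
  assert (HcP : forall t, in_Ico x0 b t -> continuity_pt P t) by (intros; eapply ext_cont; eauto).
  assert (HdU : forall t, x0 < t -> Rbar_lt t b -> is_derive U t (P t)).
  { intros t H1 H2. rewrite HPeq by (split; [lra|auto]). eapply ext_deriv; eauto. }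
  assert (HdP : forall t, x0 < t -> Rbar_lt t b -> is_derive P t (u'' t)).
  { intros t H1 H2. eapply ext_deriv; eauto. }
  assert (HUpos : forall t, in_Ico x0 b t -> 0 < U t) by (intros; rewrite HUeq; auto).
  pose (W := fun t => (1 + P t * P t) * (t * P t / 2 - U t / 2 + c / U t)).
  assert (HW : forall t, in_Ico x0 b t -> u'' t = W t).
  { intros t Ht. specialize (hode t Ht). unfold W. rewrite HUeq, HPeq by auto.
    assert (Hq : 0 < 1 + u' t ^ 2) by nra.
    replace (u'' t) with (u'' t / (1 + u' t ^ 2) * (1 + u' t ^ 2)) by (field; lra).
    rewrite hode. ring. }
  assert (HcW : forall t, in_Ico x0 b t -> continuity_pt W t).
  { intros t Ht. apply cont_W; auto. specialize (HUpos t Ht). lra. }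
  assert (Hx0i : in_Ico x0 b x0) by (split; [lra|auto]).
  assert (HP0 : P x0 = 0) by (rewrite HPeq; auto).
  assert (HW0 : 0 < W x0).
  { unfold W. rewrite HP0. specialize (HUpos x0 Hx0i). rewrite HUeq in * by auto.
    assert (Hs : sqrt (2 * c) * sqrt (2 * c) = 2 * c) by (apply sqrt_sqrt; lra).
    assert (Hsq : u x0 * u x0 < 2 * c).
    { pose proof (sqrt_pos (2 * c)). nra. }
    replace ((1 + 0 * 0) * (x0 * 0 / 2 - u x0 / 2 + c / u x0)) with ((2 * c - u x0 * u x0) / (2 * u x0)) by (field; lra).
    apply Rdiv_lt_0_compat; lra. }
  assert (HWpos : forall t, in_Ico x0 b t -> 0 < W t).
  { intros y Hy. destruct (Rlt_or_le 0 (W y)) as [|Hle]; auto. exfalso.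
    assert (Hy0 : x0 < y).
    { destruct Hy as [Hy1 _]. destruct (Req_dec x0 y) as [<-|]; [lra|lra]. }
    assert (Hiny : forall r, x0 <= r <= y -> in_Ico x0 b r).
    { intros r Hr. destruct Hy. split; [lra|]. apply Rbar_lt_le_trans' with y; [lra|auto]. }
    destruct (first_failure W x0 y Hy0) as [x1 [[Hx1a Hx1b] [HWx1 Hbelow]]]; auto.
    assert (Hx1i : in_Ico x0 b x1) by (apply Hiny; lra).
    assert (Hin1 : forall r, x0 <= r <= x1 -> in_Ico x0 b r) by (intros; apply Hiny; lra).
    assert (HWnn : forall r, x0 <= r <= x1 -> 0 <= W r).
    { intros r Hr. destruct (Req_dec r x1) as [->|]; [lra|]. left; apply Hbelow; lra. }
    assert (Pmono : forall s r, x0 <= s -> s < r -> r <= x1 -> P s <= P r).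
    { intros s r Hs Hsr Hr.
      destruct (mvt_Ico x0 b P u'' s r) as [xi [Hxi E]]; auto.
      { destruct (Hin1 r); [lra|auto]. }
      rewrite HW in E by (apply Hin1; lra).
      assert (0 <= W xi * (r - s)) by (apply Rmult_le_pos; [apply HWnn; lra|lra]). lra. }
    assert (Ppos : forall r, x0 < r < x1 -> 0 < P r).
    { intros r Hr.
      destruct (mvt_Ico x0 b P u'' x0 r) as [xi [Hxi E]]; auto; try lra.
      { destruct (Hin1 r); [lra|auto]. }
      rewrite HW in E by (apply Hin1; lra).
      assert (0 < W xi * (r - x0)) by (apply Rmult_lt_0_compat; [apply Hbelow; lra|lra]). lra. }
    assert (HPx1 : 0 < P x1).
    { assert (0 < P ((x0 + x1) / 2)) by (apply Ppos; lra).
      assert (P ((x0 + x1) / 2) <= P x1) by (apply Pmono; lra). lra. }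
    assert (Pnn : forall r, x0 <= r <= x1 -> 0 <= P r).
    { intros r Hr. destruct (Req_dec r x0) as [->|]; [lra|]. rewrite <- HP0. apply Pmono; lra. }
    pose (M := fun t => t * (P t * P t) + t * U t * W t - U t * P t).
    assert (HM0 : 0 < M x0).
    { unfold M. rewrite HP0. specialize (HUpos x0 Hx0i).
      assert (0 < x0 * U x0 * W x0) by (apply Rmult_lt_0_compat; [apply Rmult_lt_0_compat|]; lra).
      lra. }
    assert (HM1 : M x1 < 0).
    { unfold M. rewrite HWx1.
      specialize (HUpos x1 Hx1i).
      assert (Hphi : x1 * P x1 / 2 - U x1 / 2 + c / U x1 = 0).
      { unfold W in HWx1. apply Rmult_integral in HWx1. destruct HWx1 as [H|H]; auto. nra. }
      assert (E : x1 * P x1 - U x1 = - (2 * c / U x1)).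
      { replace (x1 * P x1 - U x1) with (2 * (x1 * P x1 / 2 - U x1 / 2 + c / U x1) - 2 * c / U x1) by (field; lra).
        rewrite Hphi. ring. }
      assert (0 < 2 * c / U x1) by (apply Rdiv_lt_0_compat; lra).
      replace (x1 * (P x1 * P x1) + x1 * U x1 * 0 - U x1 * P x1) with (P x1 * (x1 * P x1 - U x1)) by ring.
      rewrite E. nra. }
    assert (HcM : forall r, in_Ico x0 b r -> continuity_pt M r).
    { intros r Hr. unfold M.
      apply cpmi; [apply cpp|apply cpm; auto].
      - apply cpm; [apply cpi|apply cpm; auto].
      - apply (cpm (fun t => t * U t) W); [apply cpm; [apply cpi|auto]|exact (HcW r Hr)]. }
    pose (Md := fun r => r * (1 + P r * P r) * M r / 2
                 + 2 * r * P r * W r * (1 + U r * (r * P r / 2 - U r / 2 + c / U r))).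
    assert (HdM : forall r, x0 < r -> Rbar_lt r b -> is_derive M r (Md r)).
    { intros r Hr1 Hr2.
      assert (Hri : in_Ico x0 b r) by (split; [lra|auto]).
      specialize (HUpos r Hri).
      pose proof (HdU r Hr1 Hr2) as DU. pose proof (HdP r Hr1 Hr2) as DP.
      rewrite (HW r Hri) in DP.
      unfold Md, M, W. unfold W in DP.
      auto_derive.
      { repeat split; try (eexists; eauto); lra. }
      replace (Derive (fun x : R => P x) r) with ((1 + P r * P r) * (r * P r / 2 - U r / 2 + c / U r))
        by (symmetry; apply is_derive_unique; exact DP).
      replace (Derive (fun x : R => U x) r) with (P r)
        by (symmetry; apply is_derive_unique; exact DU).
      field. lra. }
    assert (HcM1 : forall r, x0 <= r <= x1 -> continuity_pt M r) by (intros r Hr; apply HcM, Hin1; lra).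
    destruct (first_failure M x0 x1 Hx1a HcM1 HM0 ltac:(lra)) as [x2 [[Hx2a Hx2b] [HMx2 HMbelow]]].
    assert (Hx2b' : Rbar_lt x2 b) by (destruct (Hin1 x2); [lra|auto]).
    destruct (mvt_Ico x0 b M Md x0 x2 ltac:(lra) Hx2a Hx2b' HdM HcM) as [xi [Hxi E]].
    assert (Hxii : in_Ico x0 b xi) by (apply Hin1; lra).
    assert (HMxi : 0 <= M xi).
    { destruct (Req_dec xi x2) as [->|]; [lra|]. left; apply HMbelow; lra. }
    assert (HWxi : 0 <= W xi) by (apply HWnn; lra).
    assert (HPxi : 0 <= P xi) by (apply Pnn; lra).
    specialize (HUpos xi Hxii).
    assert (Hphixi : 0 <= xi * P xi / 2 - U xi / 2 + c / U xi).
    { assert (Hq : 0 < 1 + P xi * P xi) by nra.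
      replace (xi * P xi / 2 - U xi / 2 + c / U xi) with (W xi / (1 + P xi * P xi)) by (unfold W; field; lra).
      apply Rdiv_le_0_compat; lra. }
    assert (HMd : 0 <= Md xi).
    { unfold Md. apply Rplus_le_le_0_compat.
      - apply Rmult_le_pos; [|lra]. apply Rmult_le_pos; [apply Rmult_le_pos; nra|auto].
      - apply Rmult_le_pos; [|nra]. apply Rmult_le_pos; [|auto]. apply Rmult_le_pos; [|auto]. lra. }
    assert (0 <= Md xi * (x2 - x0)) by (apply Rmult_le_pos; lra).
    lra. }
  intros x y t Hx Hy Hxy Ht.
  assert (Pinc : forall s t, in_Ico x0 b s -> in_Ico x0 b t -> s < t -> P s < P t).
  { intros s r Hs Hr Hsr.
    destruct (mvt_Ico x0 b P u'' s r) as [xi [Hxi E]]; auto.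
    { destruct Hs; auto. } { destruct Hr; auto. }
    assert (Hxii : in_Ico x0 b xi).
    { destruct Hs, Hr. split; [lra|]. apply Rbar_lt_le_trans' with r; [lra|auto]. }
    rewrite HW in E by auto. specialize (HWpos xi Hxii).
    assert (0 < W xi * (r - s)) by (apply Rmult_lt_0_compat; lra). lra. }
  assert (Hzi : in_Ico x0 b (t * x + (1 - t) * y)).
  { destruct Hx, Hy. split; [nra|].
    destruct (Rle_dec x y).
    - apply Rbar_lt_le_trans' with y; [nra|auto].
    - apply Rbar_lt_le_trans' with x; [nra|auto]. }
  rewrite <- (HUeq x), <- (HUeq y), <- (HUeq _ Hzi) by auto.
  destruct (Rlt_dec x y) as [Hlt|Hnlt].
  - eapply convex_from_deriv; eauto.
  - assert (y < x) by lra.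
    replace (t * x + (1 - t) * y) with ((1 - t) * y + (1 - (1 - t)) * x) by ring.
    replace (t * U x + (1 - t) * U y) with ((1 - t) * U y + (1 - (1 - t)) * U x) by ring.
    eapply convex_from_deriv; eauto. lra.
Qed.
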